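(* Let $\mathfrak{U}$ be a symmetrically pseudo-amenable Banach algebra and $J$ a closed two-sided ideal of $\mathfrak{U}$. Suppose $J$ has an approximate identity $\{e_i\}_{i\in I}$ such that the operators $L_i:\mathfrak{U}\to J$, $a\mapsto e_ia$, and $R_i:\mathfrak{U}\to J$, $a\mapsto ae_i$, are uniformly bounded, i.e. there is $M\ge1$ with $\|e_ia\|\le M\|a\|$ and $\|ae_i\|\le M\|a\|$ for all $i\in I$, $a\in\mathfrak{U}$. Then $J$ is symmetrically pseudo-amenable.
   Context: An approximate identity for $J$ is a net $\{e_i\}$ in $J$ with $e_ia\to a$ and $ae_i\to a$ for all $a\in J$ (not necessarily bounded). For a Banach algebra $\mathfrak{U}$, $\mathfrak{U}\widehat{\otimes}\mathfrak{U}$ is the projective tensor product, with $a(b\otimes c)=ab\otimes c$, $(b\otimes c)a=b\otimes ca$, and $\pi(b\otimes c)=bc$ (extended linearly and continuously). The flip is $(b\otimes c)^{\circ}=c\otimes b$; $\mathbf{t}$ is symmetric if $\mathbf{t}^\circ=\mathbf{t}$. An approximate diagonal is a net $\{\mathbf{t}_\lambda\}$ in $\mathfrak{U}\widehat{\otimes}\mathfrak{U}$ (not necessarily bounded) with $a\mathbf{t}_\lambda-\mathbf{t}_\lambda a\to0$ and $\pi(\mathbf{t}_\lambda)a\to a$ for all $a\in\mathfrak{U}$. $\mathfrak{U}$ is symmetrically pseudo-amenable if it has an approximate diagonal consisting of symmetric elements. *)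

(* Defs.v *)
From mathcomp Require Import all_boot all_algebra.
From mathcomp Require Import all_classical all_reals all_analysis.
From mathcomp Require Export complex.
Import numFieldNormedType.Exports.
Set Implicit Arguments. Unset Strict Implicit. Unset Printing Implicit Defensive.
Local Open Scope ring_scope.
Local Open Scope classical_set_scope.

Section Defs.
Context {K : numFieldType} {V : normedModType K}.

Definition normed_alg_mul (mul : V -> V -> V) : Prop :=
  [/\ (forall x y z, mul (x + y) z = mul x z + mul y z),
      (forall x y z, mul z (x + y) = mul z x + mul z y),
      (forall (c : K) x y, mul (c *: x) y = c *: mul x y /\ mul x (c *: y) = c *: mul x y),
      (forall x y z, mul (mul x y) z = mul x (mul y z)) &
      (forall x y, `|mul x y| <= `|x| * `|y|)].

Definition closed_ideal (mul : V -> V -> V) (J : set V) : Prop :=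
  [/\ closed J, J 0, (forall x y, J x -> J y -> J (x + y)),
      (forall (c : K) x, J x -> J (c *: x)) &
      (forall a x, J x -> J (mul a x) /\ J (mul x a))].

Definition directed {I : Type} (le : I -> I -> Prop) : Prop :=
  [/\ (forall i, le i i), (forall i j k, le i j -> le j k -> le i k),
      (exists i : I, True) & (forall i j, exists k, le i k /\ le j k)].

Definition net_cvg {I : Type} (le : I -> I -> Prop) (x : I -> V) (l : V) : Prop :=
  forall e : K, 0 < e -> exists i0, forall i, le i0 i -> `|x i - l| < e.

(* Elements of the completed projective tensor product A (^) A, where A is a
   closed subalgebra of V carrying the restricted norm, are represented as
   sums  sum_n a_n (x) b_n  with a_n, b_n in A and sum_n |a_n| |b_n| < oo. *)
Definition tens := ((nat -> V) * (nat -> V))%type.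

Definition tens_on (A : set V) (t : tens) : Prop :=
  (forall n, A (t.1 n) /\ A (t.2 n)) /\
  cvgn (series (fun n => (`|t.1 n| * `|t.2 n| : K^o))).

(* bounded bilinear forms on A x A of norm <= 1; these form the unit ball of
   the dual space (A (^) A)^* *)
Definition bilin_le1 (A : set V) (phi : V -> V -> K) : Prop :=
  [/\ (forall x y z, A x -> A y -> A z ->
         phi (x + y) z = phi x z + phi y z /\ phi z (x + y) = phi z x + phi z y),
      (forall (c : K) x y, A x -> A y ->
         phi (c *: x) y = c * phi x y /\ phi x (c *: y) = c * phi x y) &
      (forall x y, A x -> A y -> `|phi x y| <= `|x| * `|y|)].

Definition tpair (phi : V -> V -> K) (t : tens) : K :=
  limn (series (fun n => (phi (t.1 n) (t.2 n) : K^o))).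

Definition tlact (mul : V -> V -> V) (a : V) (t : tens) : tens :=
  (fun n => mul a (t.1 n), t.2).
Definition tract (mul : V -> V -> V) (t : tens) (a : V) : tens :=
  (t.1, fun n => mul (t.2 n) a).
Definition tflip (t : tens) : tens := (t.2, t.1).
Definition tpi (mul : V -> V -> V) (t : tens) : V :=
  limn (series (fun n => mul (t.1 n) (t.2 n))).

(* t and s define the same element of A (^) A *)
Definition teq (A : set V) (t s : tens) : Prop :=
  forall phi, bilin_le1 A phi -> tpair phi t = tpair phi s.

(* The closed subalgebra A of (V, mul) (with the restricted norm) is
   symmetrically pseudo-amenable: it has an approximate diagonal (a net, not
   necessarily bounded) consisting of symmetric elements of A (^) A.
   The projective norm ||t - s||_pi is  sup_{phi} |<phi,t> - <phi,s>|  over the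
   unit ball of bounded bilinear forms on A x A, so "||..||_pi -> 0" is
   expressed by the uniform bound below. *)
Definition sym_pseudo_amenable (mul : V -> V -> V) (A : set V) : Prop :=
  exists (I : Type) (le : I -> I -> Prop) (t : I -> tens),
    [/\ directed le,
        (forall i, tens_on A (t i)),
        (forall i, teq A (tflip (t i)) (t i)),
        (forall a, A a -> forall e : K, 0 < e -> exists i0, forall i, le i0 i ->
            forall phi, bilin_le1 A phi ->
              `|tpair phi (tlact mul a (t i)) - tpair phi (tract mul (t i) a)| <= e) &
        (forall a, A a -> net_cvg le (fun i => mul (tpi mul (t i)) a) a)].

End Defs.

(* Main.v *)
Require Import Defs.
From mathcomp Require Import all_boot all_order all_algebra.
From mathcomp Require Import all_classical all_reals all_analysis.
From mathcomp Require Import complex.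
From mathcomp Require Import ring.
Import numFieldNormedType.Exports.
Import Order.TTheory GRing.Theory Num.Theory.
Local Open Scope ring_scope.
Local Open Scope classical_set_scope.

Set Implicit Arguments. Unset Strict Implicit. Unset Printing Implicit Defensive.

Section Gen.
Context {K : numFieldType} {V : normedModType K}.

Lemma nearN (P : nat -> Prop) :
  (\forall n \near \oo, P n) <-> (exists N, forall n, (N <= n)%N -> P n).
Proof.
split.
  by move=> [N _ HN]; exists N => n Nn; apply: HN.
by move=> [N HN]; exists N => // n Nn; apply: HN.
Qed.

Lemma cvg_epsN (s : nat -> V) (l : V) :
  s @ \oo --> l <-> (forall e : K, 0 < e -> exists N, forall n, (N <= n)%N -> `|l - s n| < e).
Proof.
rewrite cvgrPdist_lt; split => H e e0; apply/nearN; exact: H.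
Qed.

Lemma cauchy_seq_ex (s : nat -> V) :
  (forall e : K, 0 < e -> exists N, forall n, (N <= n)%N -> `|s N - s n| < e) ->
  cauchy (s @ \oo).
Proof.
move=> H; apply: cauchy_exP => e e0.
have [N HN] := H e e0; exists (s N).
apply/nearN; exists N => n Nn; rewrite -ball_normE /ball_ /=; exact: HN.
Qed.

Lemma ser_cauchy (u : nat -> V) : cvgn (series u) ->
  forall e : K, 0 < e -> exists N, forall m n, (N <= m)%N -> (m <= n)%N ->
    `|\sum_(m <= k < n) u k| < e.
Proof.
move=> /cvg_epsN H e e0.
have [N HN] := H (e / 2) (divr_gt0 e0 (ltr0Sn _ 1)).
exists N => m n Nm mn.
rewrite -sub_series_geq //.
have -> : series u n - series u m =
   (limn (series u) - series u m) - (limn (series u) - series u n).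
  by rewrite [RHS]addrC opprB addrA subrK.
rewrite (splitr e); apply: le_lt_trans (ler_normB _ _) _.
apply: ltrD; apply: HN => //; exact: leq_trans mn.
Qed.

End Gen.
Section Gen2.
Context {K : numFieldType} {V : normedModType K}.
Lemma cmp_cauchy (u : nat -> V) (r : nat -> K) :
  (forall n, `|u n| <= r n) -> cvgn (series r) ->
  forall e : K, 0 < e -> exists N, forall m n, (N <= m)%N -> (m <= n)%N ->
    `|\sum_(m <= k < n) u k| < e.
Proof.
move=> ur rc e e0; have [N HN] := @ser_cauchy K K r rc e e0.
exists N => m n Nm mn; apply: le_lt_trans (HN m n Nm mn).
apply: le_trans (ler_norm_sum _ _ _) _.
have r0 : forall k, 0 <= r k by move=> k; exact: le_trans (normr_ge0 _) (ur k).
rewrite ger0_norm; last by apply: sumr_ge0 => k _.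
by apply: ler_sum => k _.
Qed.

Lemma cauchy_ser (u : nat -> V) :
  (forall e : K, 0 < e -> exists N, forall m n, (N <= m)%N -> (m <= n)%N ->
    `|\sum_(m <= k < n) u k| < e) -> cauchy (series u @ \oo).
Proof.
move=> H; apply: cauchy_seq_ex => e e0; have [N HN] := H e e0.
exists N => n Nn; rewrite -normrN opprB sub_series_geq //; exact: HN.
Qed.

End Gen2.

Lemma cmp_cvgU {K : numFieldType} {U : completeNormedModType K}
  (u : nat -> U) (r : nat -> K) :
  (forall n, `|u n| <= r n) -> cvgn (series r) -> cvgn (series u).
Proof.
move=> ur rc; apply/cauchy_cvgP; apply: cauchy_ser; exact: cmp_cauchy ur rc.
Qed.

Section Cplx.
Variable R : realType.
Local Notation C := R[i].
Local Open Scope complex_scope.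
Local Notation ReC := (@complex.Re R).
Local Notation ImC := (@complex.Im R).

Lemma normCE (z : C) : `|z| = (ComplexField.Normc.normc z)%:C.
Proof. by []. Qed.

Lemma normC_real (k : R) : `|k%:C| = `|k|%:C.
Proof.
rewrite normc_def /=; congr (_%:C).
by rewrite expr0n /= addr0 sqrtr_sqr.
Qed.

Lemma normC_i : `|'i : C| = 1.
Proof.
rewrite normc_def /= expr0n /= add0r expr1n sqrtr1 //.
Qed.

Lemma Im_le (z : C) : `|ImC z|%:C <= `|z|.
Proof.
have := normc_ge_Re (z * 'i); rewrite ReiNIm normrN normrM normC_i mulr1 //.
Qed.

Lemma norm_le_ReIm (z : C) : `|z| <= (`|ReC z| + `|ImC z|)%:C.
Proof.
rewrite {1}[z]complexE; apply: le_trans (ler_normD _ _) _.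
by rewrite normrM normC_i mul1r !normC_real rmorphD.
Qed.

Lemma ReB (x y : C) : ReC (x - y) = ReC x - ReC y.
Proof. by rewrite raddfB. Qed.
Lemma ImB (x y : C) : ImC (x - y) = ImC x - ImC y.
Proof. by rewrite raddfB. Qed.

Lemma posC (e : C) : 0 < e -> e = (ReC e)%:C /\ 0 < ReC e.
Proof.
rewrite ltcE => /andP[/eqP H1 H2]; split => //.
by case: e H1 H2 => a b /= -> .
Qed.

Lemma Re_cvg (s : nat -> C^o) (l : C^o) : s @ \oo --> l -> (fun n => ReC (s n)) @ \oo --> ReC l.
Proof.
move/cvg_epsN => H; apply/cvg_epsN => e e0.
have [N HN] := H e%:C ltac:(by rewrite ltcR).
exists N => n Nn; rewrite -ReB -ltcR; apply: le_lt_trans (normc_ge_Re _) _.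
exact: HN.
Qed.

Lemma Im_cvg (s : nat -> C^o) (l : C^o) : s @ \oo --> l -> (fun n => ImC (s n)) @ \oo --> ImC l.
Proof.
move/cvg_epsN => H; apply/cvg_epsN => e e0.
have [N HN] := H e%:C ltac:(by rewrite ltcR).
exists N => n Nn; rewrite -ImB -ltcR; apply: le_lt_trans (Im_le _) _.
exact: HN.
Qed.

Lemma C_cvg (s : nat -> C^o) (a b : R) :
  (fun n => ReC (s n)) @ \oo --> a -> (fun n => ImC (s n)) @ \oo --> b ->
  s @ \oo --> (a +i* b : C^o).
Proof.
move=> /cvg_epsN Ha /cvg_epsN Hb; apply/cvg_epsN => e e0.
have [-> e'0] := posC e0.
have e2 : 0 < ReC e / 2 by rewrite divr_gt0.
have [N1 H1] := Ha _ e2; have [N2 H2] := Hb _ e2.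
exists (maxn N1 N2) => n; rewrite geq_max => /andP[n1 n2].
apply: le_lt_trans (norm_le_ReIm _) _; rewrite ltcR (splitr (ReC e)).
by rewrite ReB ImB; apply: ltrD; [apply: H1 | apply: H2].
Qed.

Lemma cauchyC (s : nat -> C^o) :
  (forall e : C, 0 < e -> exists N, forall n, (N <= n)%N -> `|s N - s n| < e) ->
  cvgn s.
Proof.
move=> H.
have HRe : cvgn (fun n => ReC (s n)).
  apply/cauchy_cvgP; apply: cauchy_exP => e e0.
  have [N HN] := H e%:C ltac:(by rewrite ltcR); exists (ReC (s N)).
  apply/nearN; exists N => n Nn; rewrite -ball_normE /ball_ /=.
  rewrite -ReB -ltcR; apply: le_lt_trans (normc_ge_Re _) _; exact: HN.
have HIm : cvgn (fun n => ImC (s n)).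
  apply/cauchy_cvgP; apply: cauchy_exP => e e0.
  have [N HN] := H e%:C ltac:(by rewrite ltcR); exists (ImC (s N)).
  apply/nearN; exists N => n Nn; rewrite -ball_normE /ball_ /=.
  rewrite -ImB -ltcR; apply: le_lt_trans (Im_le _) _; exact: HN.
apply/cvg_ex; exists ((limn (fun n => ReC (s n)) +i* limn (fun n => ImC (s n))) : C^o).
exact: C_cvg.
Qed.

Lemma lim_ge0C (s : nat -> C^o) (l : C^o) : (forall n, 0 <= s n) -> s @ \oo --> l -> 0 <= l.
Proof.
move=> s0 sl; rewrite lecE; apply/andP; split.
  have : (fun n => ImC (s n)) = fun _ => 0.
    apply: funext => n; have := s0 n; rewrite lecE => /andP[/eqP -> _] //.
  move=> E; have := Im_cvg sl; rewrite E => /cvg_lim <- //.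
  by rewrite lim_cst.
apply: (cvgr_to_ge (Re_cvg sl)); apply/nearN; exists 0%N => n _.
by have := s0 n; rewrite lecE => /andP[_ ->].
Qed.


Lemma cvgK (z : nat -> C^o) (r : nat -> C^o) :
  (forall n, `|z n| <= r n) -> cvgn (series r) -> cvgn (series z).
Proof.
move=> zr rc; apply: cauchyC => e e0.
have [N HN] := cmp_cauchy zr rc e0.
exists N => n Nn; rewrite -normrN opprB sub_series_geq //; exact: HN.
Qed.


Lemma lim_norm_le (V : normedModType R[i]) (u : nat -> V) (r : nat -> C^o) :
  (forall n, `|u n| <= r n) -> cvgn (series u) -> cvgn (series r) ->
  `|limn (series u)| <= limn (series r).
Proof.
move=> ur uc rc.
have H1 : (fun n => `|series u n|) @ \oo --> (`|limn (series u)| : C^o).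
  exact: cvg_norm.
have H : (fun n => (series r n - `|series u n| : C^o)) @ \oo --> (limn (series r) - `|limn (series u)| : C^o).
  exact: (cvgB rc H1).
rewrite -subr_ge0; apply: (lim_ge0C _ H) => n; rewrite subr_ge0.
apply: le_trans (ler_norm_sum _ _ _) _; exact: ler_sum.
Qed.
End Cplx.

Lemma lip_cvg_dummy : True. Proof. by []. Qed.
Section Lip.
Variable R : realType.
Lemma lip_cvg (V : normedModType R[i]) (f : V -> V) (c : R[i]) (s : nat -> V) (l : V) :
  0 <= c -> (forall x y, `|f x - f y| <= c * `|x - y|) ->
  s @ \oo --> l -> (fun n => f (s n)) @ \oo --> f l.
Proof.
move=> c0 fl /cvg_epsN H; apply/cvg_epsN => e e0.
have c1 : 0 < c + 1 by rewrite ltr_wpDl.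
have [N HN] := H (e / (c + 1)) (divr_gt0 e0 c1).
exists N => n Nn; apply: le_lt_trans (fl _ _) _.
apply: le_lt_trans (ler_wpM2l c0 (ltW (HN n Nn))) _.
rewrite mulrA ltr_pdivrMr // mulrC ltr_pM2l //.
by rewrite ltrDl.
Qed.

Lemma ser_add (V : normedModType R[i]) (u v : nat -> V) :
  cvgn (series u) -> cvgn (series v) ->
  cvgn (series (fun n => u n + v n)) /\
  limn (series (fun n => u n + v n)) = limn (series u) + limn (series v).
Proof.
move=> uc vc.
have E : series (fun n => u n + v n) = (fun n => series u n + series v n).
  by apply: funext => n; rewrite /series /= big_split.
have H : series (fun n => u n + v n) @ \oo --> limn (series u) + limn (series v).
  by rewrite E; exact: (cvgD uc vc).
split; first by apply/cvg_ex; eexists; exact: H.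
apply: cvg_lim; first exact: norm_hausdorff.
exact: H.
Qed.

Lemma ser_scale (V : normedModType R[i]) (u : nat -> V) (k : R[i]) :
  cvgn (series u) ->
  cvgn (series (fun n => k *: u n)) /\
  limn (series (fun n => k *: u n)) = k *: limn (series u).
Proof.
move=> uc.
have E : series (fun n => k *: u n) = (fun n => k *: series u n).
  by apply: funext => n; rewrite /series /= scaler_sumr.
have H : series (fun n => k *: u n) @ \oo --> k *: limn (series u).
  rewrite E; apply: (@lip_cvg V (fun x => k *: x) `|k| (series u)) => //.
  by move=> x y; rewrite -scalerBr normrZ.
split; first by apply/cvg_ex; eexists; exact: H.
apply: cvg_lim; first exact: norm_hausdorff.
exact: H.
Qed.

Lemma ser_sub (V : normedModType R[i]) (u v : nat -> V) :
  cvgn (series u) -> cvgn (series v) ->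
  cvgn (series (fun n => u n - v n)) /\
  limn (series (fun n => u n - v n)) = limn (series u) - limn (series v).
Proof.
move=> uc vc.
have [c1 l1] := ser_scale (-1) vc.
have [c2 l2] := ser_add uc c1.
have E : (fun n => u n + (-1) *: v n) = (fun n => u n - v n).
  by apply: funext => n; rewrite scaleN1r.
by rewrite -E; split => //; rewrite l2 l1 scaleN1r.
Qed.

Lemma ser_bound (V : normedModType R[i]) (u : nat -> V) (r : nat -> R[i]^o) (c : R[i]) :
  (forall n, `|u n| <= c * r n) -> cvgn (series u) -> cvgn (series r) ->
  `|limn (series u)| <= c * limn (series r).
Proof.
move=> ur uc rc.
have [c1 l1] := ser_scale c rc.
have := @lim_norm_le R V u (fun n => (c *: r n : R[i]^o)) ur uc c1.
by rewrite l1.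
Qed.

Lemma cvgK_bound (z : nat -> R[i]^o) (r : nat -> R[i]^o) (c : R[i]) :
  (forall n, `|z n| <= c * r n) -> cvgn (series r) ->
  cvgn (series z) /\ `|limn (series z)| <= c * limn (series r).
Proof.
move=> zr rc.
have [c1 l1] := ser_scale c rc.
have zc : cvgn (series z) := @cvgK R z (fun n => (c *: r n : R[i]^o)) zr c1.
split => //; exact: ser_bound zr zc rc.
Qed.

Lemma cvgU_bound (U : completeNormedModType R[i]) (z : nat -> U) (r : nat -> R[i]^o) (c : R[i]) :
  (forall n, `|z n| <= c * r n) -> cvgn (series r) ->
  cvgn (series z) /\ `|limn (series z)| <= c * limn (series r).
Proof.
move=> zr rc.
have [c1 l1] := ser_scale c rc.
have zc : cvgn (series z) := @cmp_cvgU _ U z (fun n => (c *: r n : R[i]^o)) zr c1.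
split => //; exact: ser_bound zr zc rc.
Qed.
End Lip.


Section Tail.
Variable R : realType.
Lemma ser_tail (V : normedModType R[i]) (u : nat -> V) (r : nat -> R[i]^o) (c : R[i]) (N : nat) :
  0 <= c -> (forall n, 0 <= r n) -> (forall n, `|u n| <= c * r n) -> cvgn (series u) -> cvgn (series r) ->
  `|limn (series u) - series u N| <= c * `|limn (series r) - series r N|.
Proof.
move=> c0 r0 ur uc rc.
have Es : forall (W : zmodType) (f : nat -> W) n,
    series (fun k => f (k + N)%N) n = series f (n + N)%N - series f N.
  move=> W f n; rewrite series_addn addrC addKr /series /=.
  by rewrite -{2}[N]add0n big_addn addnK.
have cu' : series (fun k => u (k + N)%N) @ \oo --> limn (series u) - series u N.
  have -> : series (fun k => u (k + N)%N) = (fun n => series u (n + N)%N - series u N).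
    by apply: funext => n; rewrite Es.
  apply: cvgB; last exact: cvg_cst.
  by rewrite (cvg_shiftn N (series u)).
have cr' : series (fun k => r (k + N)%N) @ \oo --> limn (series r) - series r N.
  have -> : series (fun k => r (k + N)%N) = (fun n => series r (n + N)%N - series r N).
    by apply: funext => n; rewrite Es.
  apply: cvgB; last exact: cvg_cst.
  by rewrite (cvg_shiftn N (series r)).
have H := @ser_bound R V (fun k => u (k + N)%N) (fun k => r (k + N)%N) c
  (fun n => ur (n + N)%N) (cvgP _ cu') (cvgP _ cr').
rewrite (cvg_lim _ cu') ?(cvg_lim _ cr') in H; try exact: norm_hausdorff.
apply: (le_trans H); apply: ler_wpM2l => //.
by rewrite real_ler_norm // ger0_real // (lim_ge0C _ cr') // => n; apply: sumr_ge0.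
Qed.
End Tail.



Section Dir.
Lemma ev_and {Ix : Type} (le : Ix -> Ix -> Prop) (P Q : Ix -> Prop) : directed le ->
  (exists i0, forall i, le i0 i -> P i) -> (exists i0, forall i, le i0 i -> Q i) ->
  exists i0, forall i, le i0 i -> P i /\ Q i.
Proof.
case=> _ tr _ up [i1 H1] [i2 H2]; have [k [k1 k2]] := up i1 i2.
by exists k => i ki; split; [apply: H1 | apply: H2]; apply: tr ki.
Qed.

Lemma ev_all {Ix : Type} (le : Ix -> Ix -> Prop) {T : eqType} (F : seq T)
  (Q : T -> Prop) (P : T -> Ix -> Prop) : directed le ->
  (forall a, a \in F -> Q a -> exists i0, forall i, le i0 i -> P a i) ->
  exists i0, forall a, a \in F -> Q a -> forall i, le i0 i -> P a i.
Proof.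
move=> dir; case: (dir) => rf tr [i00 _] up.
elim: F => [|b F IH] H; first by exists i00 => a; rewrite in_nil.
have [i1 H1] : exists i0, forall a, a \in F -> Q a -> forall i, le i0 i -> P a i.
  by apply: IH => a aF; apply: H; rewrite in_cons aF orbT.
case: (pselect (Q b)) => Qb.
  have [i2 H2] := H b (mem_head _ _) Qb.
  have [k [k1 k2]] := up i1 i2.
  exists k => a; rewrite in_cons => /orP [/eqP -> | aF] Qa i ki.
    by apply: H2; apply: tr ki.
  by apply: H1 => //; apply: tr ki.
exists i1 => a; rewrite in_cons => /orP [/eqP -> | aF] Qa i ki //.
exact: H1.
Qed.

Lemma dir_nat : directed (fun m n : nat => (m <= n)%N).
Proof.
split => //; first by move=> i j k; apply: leq_trans.
  by exists 0%N.
by move=> i j; exists (maxn i j); rewrite leq_maxl leq_maxr.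
Qed.

Lemma frac_le (F : numFieldType) (c k : F) : 0 <= c -> 0 < k -> c * (k / (c + 1)) <= k.
Proof.
move=> c0 k0; have c1 : 0 < c + 1 by rewrite ltr_wpDl.
by rewrite mulrA ler_pdivrMr // mulrDr mulr1 mulrC lerDl ltW.
Qed.
End Dir.

Section Alg.
Variable R : realType.
Local Notation C := R[i].
Variable U : completeNormedModType C.
Variable mul : U -> U -> U.
Hypothesis Halg : normed_alg_mul mul.

Lemma mulDl x y z : mul (x + y) z = mul x z + mul y z.
Proof. by case: Halg. Qed.
Lemma mulDr x y z : mul z (x + y) = mul z x + mul z y.
Proof. by case: Halg. Qed.
Lemma mulZl (c : C) x y : mul (c *: x) y = c *: mul x y.
Proof. by case: Halg => _ _ H _ _; case: (H c x y). Qed.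
Lemma mulZr (c : C) x y : mul x (c *: y) = c *: mul x y.
Proof. by case: Halg => _ _ H _ _; case: (H c x y). Qed.
Lemma mulA x y z : mul (mul x y) z = mul x (mul y z).
Proof. by case: Halg. Qed.
Lemma normM x y : `|mul x y| <= `|x| * `|y|.
Proof. by case: Halg. Qed.
Lemma mul0l x : mul 0 x = 0.
Proof. by have := mulDl 0 0 x; rewrite addr0 -{1}[mul 0 x]addr0 => /addrI <-. Qed.
Lemma mul0r x : mul x 0 = 0.
Proof. by have := mulDr 0 0 x; rewrite addr0 -{1}[mul x 0]addr0 => /addrI <-. Qed.
Lemma mulNl x y : mul (- x) y = - mul x y.
Proof. by apply/eqP; rewrite -subr_eq0 opprK -mulDl addNr mul0l. Qed.
Lemma mulNr x y : mul x (- y) = - mul x y.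
Proof. by apply/eqP; rewrite -subr_eq0 opprK -mulDr addNr mul0r. Qed.
Lemma mulBl x y z : mul (x - y) z = mul x z - mul y z.
Proof. by rewrite mulDl mulNl. Qed.
Lemma mulBr x y z : mul z (x - y) = mul z x - mul z y.
Proof. by rewrite mulDr mulNr. Qed.

Lemma mul_suml (u : nat -> U) a m n :
  mul (\sum_(m <= k < n) u k) a = \sum_(m <= k < n) mul (u k) a.
Proof.
by apply: (big_morph (fun x => mul x a)) => [x y|]; rewrite ?mulDl ?mul0l.
Qed.
Lemma mul_sumr (u : nat -> U) a m n :
  mul a (\sum_(m <= k < n) u k) = \sum_(m <= k < n) mul a (u k).
Proof.
by apply: (big_morph (fun x => mul a x)) => [x y|]; rewrite ?mulDr ?mul0r.
Qed.



Lemma ser_mulr (u : nat -> U) a : cvgn (series u) ->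
  cvgn (series (fun n => mul (u n) a)) /\
  limn (series (fun n => mul (u n) a)) = mul (limn (series u)) a.
Proof.
move=> uc.
have E : series (fun n => mul (u n) a) = (fun n => mul (series u n) a).
  by apply: funext => n; rewrite /series /= mul_suml.
have H : series (fun n => mul (u n) a) @ \oo --> mul (limn (series u)) a.
  rewrite E; apply: (@lip_cvg _ _ (fun x => mul x a) `|a|) => //.
  by move=> x y; rewrite -mulBl mulrC normM.
split; first by apply/cvg_ex; eexists; exact: H.
exact: cvg_lim H.
Qed.

Lemma ser_mull (u : nat -> U) a : cvgn (series u) ->
  cvgn (series (fun n => mul a (u n))) /\
  limn (series (fun n => mul a (u n))) = mul a (limn (series u)).
Proof.
move=> uc.
have E : series (fun n => mul a (u n)) = (fun n => mul a (series u n)).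
  by apply: funext => n; rewrite /series /= mul_sumr.
have H : series (fun n => mul a (u n)) @ \oo --> mul a (limn (series u)).
  rewrite E; apply: (@lip_cvg _ _ (fun x => mul a x) `|a|) => //.
  by move=> x y; rewrite -mulBr normM.
split; first by apply/cvg_ex; eexists; exact: H.
exact: cvg_lim H.
Qed.

Lemma limn_scaleC (s : nat -> C^o) (k : C) : cvgn s ->
  limn (fun n => (k * s n : C^o)) = k * limn s.
Proof.
move=> sc; apply: cvg_lim; first exact: norm_hausdorff.
apply: (@lip_cvg R C^o (fun x : C^o => (k * x : C^o)) `|k| s) => //.
by move=> x y; rewrite -mulrBr normrM.
Qed.

Variable J : set U.
Hypothesis HJ : closed_ideal mul J.

Lemma JmR x a : J x -> J (mul a x).
Proof. by case: HJ => _ _ _ _ H Jx; case: (H a x Jx). Qed.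
Lemma JmL x a : J x -> J (mul x a).
Proof. by case: HJ => _ _ _ _ H Jx; case: (H a x Jx). Qed.
Lemma JD x y : J x -> J y -> J (x + y).
Proof. by case: HJ => _ _ H _ _; apply: H. Qed.
Lemma JZ (c : C) x : J x -> J (c *: x).
Proof. by case: HJ => _ _ _ H _; apply: H. Qed.
Lemma JB x y : J x -> J y -> J (x - y).
Proof. by move=> Jx Jy; apply: JD => //; rewrite -scaleN1r; apply: JZ. Qed.

Definition tt (e : U) (m : @tens _ U) : @tens _ U :=
  (fun n => mul e (m.1 n), fun n => mul e (m.2 n)).
Definition psi (phi : U -> U -> C) (e : U) (M : C) (x y : U) : C :=
  (M ^+ 2)^-1 * phi (mul e x) (mul e y).
Definition rr (m : @tens _ U) (n : nat) : C^o := `|m.1 n| * `|m.2 n|.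

Section Fixed.
Variables (e : U) (M : C).
Hypotheses (Je : J e) (M1 : 1 <= M)
  (HM : forall a, `|mul e a| <= M * `|a| /\ `|mul a e| <= M * `|a|).

Lemma M0 : 0 < M.
Proof. exact: lt_le_trans ltr01 M1. Qed.

Lemma psi_bil phi : bilin_le1 J phi -> bilin_le1 setT (psi phi e M).
Proof.
case=> Hadd Hsc Hb; split.
- move=> x y z _ _ _; rewrite /psi !mulDr.
  have [-> ->] := Hadd (mul e x) (mul e y) (mul e z) (JmL _ Je) (JmL _ Je) (JmL _ Je).
  by rewrite !mulrDr.
- move=> c x y _ _; rewrite /psi mulZr mulZr.
  have [-> ->] := Hsc c (mul e x) (mul e y) (JmL _ Je) (JmL _ Je).
  by split; rewrite mulrCA.
- move=> x y _ _; rewrite /psi normrM.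
  have M2 : 0 < M ^+ 2 by rewrite exprn_gt0 // M0.
  rewrite normfV (gtr0_norm M2) mulrC ler_pdivrMr //.
  apply: le_trans (Hb _ _ (JmL _ Je) (JmL _ Je)) _.
  have [H1 _] := HM x; have [H2 _] := HM y.
  apply: le_trans (ler_pM (normr_ge0 _) (normr_ge0 _) H1 H2) _.
  by rewrite expr2 mulrACA [_ * (M * M)]mulrC.
Qed.


Variable m : @tens _ U.
Hypotheses (mt : tens_on setT m) (msym : teq setT (tflip m) m).

Lemma rr_cvg : cvgn (series (rr m)).
Proof. by case: mt. Qed.

Lemma bound2 x y : `|mul e x| * `|mul e y| <= M ^+ 2 * (`|x| * `|y|).
Proof.
have [H1 _] := HM x; have [H2 _] := HM y.
apply: le_trans (ler_pM (normr_ge0 _) (normr_ge0 _) H1 H2) _.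
by rewrite expr2 mulrACA.
Qed.

Lemma t_on : tens_on J (tt e m).
Proof.
split; first by move=> n; split; apply: JmL.
have H : forall n, `|(`|mul e (m.1 n)| * `|mul e (m.2 n)| : C^o)| <= M ^+ 2 * rr m n.
  move=> n; rewrite ger0_norm ?mulr_ge0 //; exact: bound2.
by case: (cvgK_bound H rr_cvg).
Qed.

Lemma psi_le phi x y : bilin_le1 J phi -> `|psi phi e M x y| <= `|x| * `|y|.
Proof. by move=> /psi_bil [_ _ Hb]; apply: Hb. Qed.

Lemma t_sym : teq J (tflip (tt e m)) (tt e m).
Proof.
move=> phi Hphi; rewrite /tpair /tflip /tt /=.
have M2 : M ^+ 2 != 0 by rewrite expf_eq0 /= gt_eqF // M0.
have E : forall x y, (phi (mul e x) (mul e y) : C^o) = M ^+ 2 *: (psi phi e M x y : C^o).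
  by move=> x y; rewrite /psi /GRing.scale /= mulVKf.
have E1 : (fun n => (phi (mul e (m.2 n)) (mul e (m.1 n)) : C^o)) =
          (fun n => M ^+ 2 *: (psi phi e M (m.2 n) (m.1 n) : C^o)).
  by apply: funext => n; rewrite E.
have E2 : (fun n => (phi (mul e (m.1 n)) (mul e (m.2 n)) : C^o)) =
          (fun n => M ^+ 2 *: (psi phi e M (m.1 n) (m.2 n) : C^o)).
  by apply: funext => n; rewrite E.
rewrite E1 E2.
have B1 : forall n, `|(psi phi e M (m.2 n) (m.1 n) : C^o)| <= 1 * rr m n.
  by move=> n; rewrite mul1r /rr mulrC; apply: psi_le.
have B2 : forall n, `|(psi phi e M (m.1 n) (m.2 n) : C^o)| <= 1 * rr m n.
  by move=> n; rewrite mul1r /rr; apply: psi_le.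
have [c1 _] := cvgK_bound B1 rr_cvg.
have [c2 _] := cvgK_bound B2 rr_cvg.
have [_ ->] := ser_scale (M ^+ 2) c1.
have [_ ->] := ser_scale (M ^+ 2) c2.
congr (_ *: _).
exact: (msym (psi_bil Hphi)).
Qed.


Lemma t_diag phi a : bilin_le1 J phi -> J a ->
  `|tpair phi (tlact mul a (tt e m)) - tpair phi (tract mul (tt e m) a)| <=
   `|mul a e - mul e a| * M * limn (series (rr m)) +
   M ^+ 2 * `|tpair (psi phi e M) (tlact mul a m) - tpair (psi phi e M) (tract mul m a)|.
Proof.
move=> Hphi Ja; have [Hadd Hsc Hb] := Hphi.
rewrite /tpair /tlact /tract /tt /=.
pose A := fun n => (phi (mul a (mul e (m.1 n))) (mul e (m.2 n)) : C^o).
pose B := fun n => (phi (mul e (m.1 n)) (mul (mul e (m.2 n)) a) : C^o).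
pose D := fun n => (phi (mul (mul a e - mul e a) (m.1 n)) (mul e (m.2 n)) : C^o).
pose P := fun n => (psi phi e M (mul a (m.1 n)) (m.2 n) : C^o).
pose Q := fun n => (psi phi e M (m.1 n) (mul (m.2 n) a) : C^o).
have Jex : forall x, J (mul e x) by move=> x; apply: JmL.
have JD' : J (mul a e - mul e a) by apply: JB; [apply: JmR | apply: JmL].
have BA : forall n, `|A n| <= (`|a| * M ^+ 2) * rr m n.
  move=> n; apply: le_trans (Hb _ _ (JmR _ (Jex _)) (Jex _)) _.
  apply: le_trans (ler_wpM2r (normr_ge0 _) (normM _ _)) _.
  by rewrite -mulrA -mulrA ler_wpM2l // /rr bound2.
have BB : forall n, `|B n| <= (`|a| * M ^+ 2) * rr m n.
  move=> n; apply: le_trans (Hb _ _ (Jex _) (JmL _ (Jex _))) _.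
  apply: le_trans (ler_wpM2l (normr_ge0 _) (normM _ _)) _.
  rewrite mulrA.
  apply: le_trans (ler_wpM2r (normr_ge0 _) (bound2 _ _)) _.
  by rewrite [X in X <= _]mulrC mulrA.
have BD : forall n, `|D n| <= (`|mul a e - mul e a| * M) * rr m n.
  move=> n; apply: le_trans (Hb _ _ (JmL _ JD') (Jex _)) _.
  have [H2 _] := HM (m.2 n).
  apply: le_trans (ler_pM (normr_ge0 _) (normr_ge0 _) (normM _ _) H2) _.
  by rewrite /rr mulrACA mulrA.
have BP : forall n, `|P n| <= `|a| * rr m n.
  move=> n; apply: le_trans (psi_le _ _ Hphi) _.
  by rewrite /rr mulrA ler_wpM2r // normM.
have BQ : forall n, `|Q n| <= `|a| * rr m n.
  move=> n; apply: le_trans (psi_le _ _ Hphi) _.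
  by rewrite /rr mulrCA ler_wpM2l // mulrC normM.
have [cA _] := cvgK_bound BA rr_cvg.
have [cB _] := cvgK_bound BB rr_cvg.
have [cD lD] := cvgK_bound BD rr_cvg.
have [cP _] := cvgK_bound BP rr_cvg.
have [cQ _] := cvgK_bound BQ rr_cvg.
have [cPQ lPQ] := ser_sub cP cQ.
have [cS lS] := ser_scale (M ^+ 2) cPQ.
have [cDS lDS] := ser_add cD cS.
have [cAB lAB] := ser_sub cA cB.
have E : (fun n => A n - B n) = (fun n => D n + M ^+ 2 *: (P n - Q n)).
  apply: funext => n; rewrite /A /B /D /P /Q scalerBr /GRing.scale /= /psi !mulVKf;
    last 2 first.
  - by rewrite expf_eq0 /= gt_eqF // M0.
  - by rewrite expf_eq0 /= gt_eqF // M0.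
  rewrite -(mulA a e (m.1 n)) (mulA e (m.2 n) a).
  rewrite -{1}[mul a e](subrK (mul e a)) (mulDl (mul a e - mul e a) (mul e a) (m.1 n)).
  have [-> _] := Hadd (mul (mul a e - mul e a) (m.1 n)) (mul (mul e a) (m.1 n))
    (mul e (m.2 n)) (JmL _ JD') (JmL _ (JmL _ Je)) (Jex _).
  by rewrite (mulA e a (m.1 n)) addrA.
rewrite -/A -/B -lAB E lDS lS.
apply: le_trans (ler_normD _ _) _.
apply: lerD => //.
rewrite lPQ normrZ ger0_norm //; last by rewrite exprn_ge0 // ltW // M0.
Qed.

Lemma t_pi a : J a ->
  `|mul (tpi mul (tt e m)) a - a| <=
  M * `|limn (series (fun n => mul (m.1 n) (mul e (mul (m.2 n) a) - mul (m.2 n) a)))|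
  + `|mul e (mul (tpi mul m) a) - mul (tpi mul m) a| + `|mul (tpi mul m) a - a|.
Proof.
move=> Ja; rewrite /tpi /tt /=.
have M0' : 0 <= M by rewrite ltW // M0.
have Bu : forall n, `|mul (mul e (m.1 n)) (mul e (m.2 n))| <= M ^+ 2 * rr m n.
  move=> n; apply: le_trans (normM _ _) _; exact: bound2.
have Bp : forall n, `|mul (m.1 n) (m.2 n)| <= 1 * rr m n.
  by move=> n; rewrite mul1r; apply: normM.
have Bw1 : forall n, `|mul (m.1 n) (mul e (mul (m.2 n) a))| <= (M * `|a|) * rr m n.
  move=> n; apply: le_trans (normM _ _) _.
  have [H1 _] := HM (mul (m.2 n) a).
  apply: le_trans (ler_wpM2l (normr_ge0 _) H1) _.
  apply: le_trans (ler_wpM2l (normr_ge0 _) (ler_wpM2l M0' (normM _ _))) _.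
  have -> : `|m.1 n| * (M * (`|m.2 n| * `|a|)) = M * `|a| * rr m n by rewrite /rr; ring.
  by [].
have Bz : forall n, `|mul (m.1 n) (mul (m.2 n) a)| <= `|a| * rr m n.
  move=> n; apply: le_trans (normM _ _) _.
  apply: le_trans (ler_wpM2l (normr_ge0 _) (normM _ _)) _.
  have -> : `|m.1 n| * (`|m.2 n| * `|a|) = `|a| * rr m n by rewrite /rr; ring.
  by [].
have [cu _] := cvgU_bound Bu rr_cvg.
have [cp _] := cvgU_bound Bp rr_cvg.
have [cw1 _] := cvgU_bound Bw1 rr_cvg.
have [cz _] := cvgU_bound Bz rr_cvg.
have [_ E1] := ser_mulr a cu.
have [_ E2] := ser_mull e cw1.
have [_ E3] := ser_mulr a cp.
have [_ E4] := ser_sub cw1 cz.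
have Eu : (fun n => mul (mul (mul e (m.1 n)) (mul e (m.2 n))) a) =
          (fun n => mul e (mul (m.1 n) (mul e (mul (m.2 n) a)))).
  by apply: funext => n; rewrite !mulA.
have Ep : (fun n => mul (mul (m.1 n) (m.2 n)) a) = (fun n => mul (m.1 n) (mul (m.2 n) a)).
  by apply: funext => n; rewrite mulA.
have Ew : (fun n => mul (m.1 n) (mul e (mul (m.2 n) a) - mul (m.2 n) a)) =
          (fun n => mul (m.1 n) (mul e (mul (m.2 n) a)) - mul (m.1 n) (mul (m.2 n) a)).
  by apply: funext => n; rewrite mulBr.
rewrite -E1 Eu E2 Ew E4 -E3 Ep.
set W1 := limn (series (fun n => mul (m.1 n) (mul e (mul (m.2 n) a)))).
set Z := limn (series (fun n => mul (m.1 n) (mul (m.2 n) a))).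
have -> : mul e W1 - a = mul e (W1 - Z) + (mul e Z - Z) + (Z - a).
  by rewrite mulBr !addrA !subrK.
apply: le_trans (ler_normD _ _) _; apply: lerD => //.
apply: le_trans (ler_normD _ _) _; apply: lerD => //.
by have [H _] := HM (W1 - Z).
Qed.

Lemma W_bound a N :
  `|limn (series (fun n => mul (m.1 n) (mul e (mul (m.2 n) a) - mul (m.2 n) a)))| <=
  (M + 1) * `|a| * `|limn (series (rr m)) - series (rr m) N| +
  \sum_(0 <= k < N) `|m.1 k| * `|mul e (mul (m.2 k) a) - mul (m.2 k) a|.
Proof.
set w := fun n => mul (m.1 n) (mul e (mul (m.2 n) a) - mul (m.2 n) a).
have M0' : 0 <= M by rewrite ltW // M0.
have c0 : 0 <= (M + 1) * `|a| by rewrite mulr_ge0 // addr_ge0.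
have Bw : forall n, `|w n| <= (M + 1) * `|a| * rr m n.
  move=> n; rewrite /w; apply: le_trans (normM _ _) _.
  have [H1 _] := HM (mul (m.2 n) a).
  have H2 : `|mul e (mul (m.2 n) a) - mul (m.2 n) a| <= (M + 1) * (`|m.2 n| * `|a|).
    apply: le_trans (ler_normB _ _) _.
    rewrite mulrDl mul1r; apply: lerD; last exact: normM.
    apply: le_trans H1 _; apply: ler_wpM2l => //; exact: normM.
  apply: le_trans (ler_wpM2l (normr_ge0 _) H2) _.
  have -> : `|m.1 n| * ((M + 1) * (`|m.2 n| * `|a|)) = (M + 1) * `|a| * rr m n
    by rewrite /rr; ring.
  by [].
have [cw _] := cvgU_bound Bw rr_cvg.
have r0 : forall n, 0 <= rr m n by move=> n; rewrite /rr mulr_ge0.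
have T := ser_tail N c0 r0 Bw cw rr_cvg.
have -> : limn (series w) = (limn (series w) - series w N) + series w N by rewrite subrK.
apply: le_trans (ler_normD _ _) _; apply: lerD => //.
rewrite /series /=; apply: le_trans (ler_norm_sum _ _ _) _.
by apply: ler_sum => k _; rewrite /w normM.
Qed.

End Fixed.
Section Exist.
Variables (L : Type) (leL : L -> L -> Prop) (mm : L -> @tens _ U).
Hypotheses (dirL : directed leL) (mmt : forall l, tens_on setT (mm l))
  (mms : forall l, teq setT (tflip (mm l)) (mm l))
  (mmd : forall a, setT a -> forall eps : C, 0 < eps -> exists l0, forall l, leL l0 l ->
     forall phi, bilin_le1 setT phi ->
       `|tpair phi (tlact mul a (mm l)) - tpair phi (tract mul (mm l) a)| <= eps)
  (mmp : forall a, setT a -> net_cvg leL (fun l => mul (tpi mul (mm l)) a) a).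
Variables (Ix : Type) (le : Ix -> Ix -> Prop) (ee : Ix -> U) (M : C).
Hypotheses (dirI : directed le) (Jee : forall i, J (ee i))
  (eecvg : forall a, J a -> net_cvg le (fun i => mul (ee i) a) a /\
                            net_cvg le (fun i => mul a (ee i)) a)
  (M1 : 1 <= M)
  (HM : forall i a, `|mul (ee i) a| <= M * `|a| /\ `|mul a (ee i)| <= M * `|a|).

Lemma Exist (F : seq U) (eps : C) : 0 < eps -> exists t : @tens _ U,
  [/\ tens_on J t, teq J (tflip t) t &
      forall a, a \in F -> J a ->
        (forall phi, bilin_le1 J phi ->
           `|tpair phi (tlact mul a t) - tpair phi (tract mul t a)| <= eps) /\
        `|mul (tpi mul t) a - a| < eps].
Proof.
move=> eps0.
have M0 : 0 < M by exact: lt_le_trans ltr01 M1.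
have M0' : 0 <= M by exact: ltW.
set d1 := eps / 2 / M ^+ 2.
have d10 : 0 < d1 by rewrite divr_gt0 ?exprn_gt0 // divr_gt0.
set e3 := eps / 3.
have e30 : 0 < e3 by rewrite divr_gt0.
have [l0 Hl0] : exists l0, forall a, a \in F -> True -> forall l, leL l0 l ->
   (forall phi, bilin_le1 setT phi ->
       `|tpair phi (tlact mul a (mm l)) - tpair phi (tract mul (mm l) a)| <= d1) /\
   `|mul (tpi mul (mm l)) a - a| < e3.
  apply: ev_all => // a _ _; apply: ev_and => //.
    exact: mmd.
  exact: mmp.
have dirL' := dirL; case: dirL' => rfL _ _ _.
set m := mm l0.
have mt := mmt l0; have ms := mms l0.
set Sr := limn (series (rr m)).
have rc := rr_cvg mt.
have Sr0 : 0 <= Sr.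
  apply: (lim_ge0C _ rc) => n; apply: sumr_ge0 => k _.
  by rewrite /rr mulr_ge0.
set K6 := eps / (6 * M).
have K60 : 0 < K6 by rewrite divr_gt0 // mulr_gt0.
have [N HN] : exists N, forall a, a \in F -> True -> forall n, (N <= n)%N ->
    (M + 1) * `|a| * `|Sr - series (rr m) n| <= K6.
  apply: (@ev_all nat (fun m n : nat => (m <= n)%N) _ F (fun _ => True)
    (fun a n => (M + 1) * `|a| * `|Sr - series (rr m) n| <= K6) dir_nat) => a _ _.
  have c0 : 0 <= (M + 1) * `|a| by rewrite mulr_ge0 // addr_ge0.
  have c1 : 0 < (M + 1) * `|a| + 1 by rewrite ltr_wpDl.
  have [N HN] := (cvg_epsN _ _).1 rc (K6 / ((M + 1) * `|a| + 1)) (divr_gt0 K60 c1).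
  exists N => n Nn; apply: le_trans (frac_le c0 K60).
  by apply: ler_wpM2l => //; apply: ltW; apply: HN.
set X := \sum_(0 <= k < N) `|m.1 k|.
have X0 : 0 <= X by apply: sumr_ge0.
set cc := K6 / (X + 1).
have cc0 : 0 < cc by rewrite divr_gt0 // ltr_wpDl.
set eta := eps / (4 * M * (Sr + 1)).
have eta0 : 0 < eta by rewrite divr_gt0 // mulr_gt0 ?mulr_gt0 // ltr_wpDl.
have [i0 Hi0] : exists i0, forall a, a \in F -> J a -> forall i, le i0 i ->
   [/\ `|mul a (ee i) - a| < eta, `|mul (ee i) a - a| < eta,
       `|mul (ee i) (mul (tpi mul m) a) - mul (tpi mul m) a| < e3 &
       forall k, k \in iota 0 N -> `|mul (ee i) (mul (m.2 k) a) - mul (m.2 k) a| < cc].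
  apply: (@ev_all Ix le U F J (fun a i =>
   [/\ `|mul a (ee i) - a| < eta, `|mul (ee i) a - a| < eta,
       `|mul (ee i) (mul (tpi mul m) a) - mul (tpi mul m) a| < e3 &
       forall k, k \in iota 0 N -> `|mul (ee i) (mul (m.2 k) a) - mul (m.2 k) a| < cc])
     dirI) => a _ Ja.
  have [c1 c2] := eecvg Ja.
  have [ik Hk] : exists i0, forall k, k \in iota 0 N -> True -> forall i, le i0 i ->
      `|mul (ee i) (mul (m.2 k) a) - mul (m.2 k) a| < cc.
    apply: (@ev_all Ix le _ (iota 0 N) (fun _ => True) (fun k i =>
      `|mul (ee i) (mul (m.2 k) a) - mul (m.2 k) a| < cc) dirI) => k _ _.
    exact: (eecvg (JmR _ Ja)).1 cc cc0.
  have [j2 H2] : exists i0, forall i, le i0 i -> forall k, k \in iota 0 N ->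
      `|mul (ee i) (mul (m.2 k) a) - mul (m.2 k) a| < cc.
    by exists ik => i ki k kN; apply: Hk.
  have [j1 H1] := ev_and dirI (c2 _ eta0) (c1 _ eta0).
  have [j3 H3] := ev_and dirI (ex_intro _ j1 H1) (ex_intro _ j2 H2).
  have H5 := (eecvg (JmR (tpi mul m) Ja)).1 _ e30.
  have [j4 H4] := ev_and dirI (ex_intro _ j3 H3) H5.
  exists j4 => i ji; have [[[A B] C] D] := H4 i ji; by split.
have dirI' := dirI; case: dirI' => rfI _ _ _.
set e := ee i0.
exists (tt e m); split.
- exact: (@t_on e M (Jee i0) (HM i0) m mt).
- exact: (@t_sym e M (Jee i0) M1 (HM i0) m mt ms).
move=> a aF Ja.
have [Hae Hea HPa Hk] := Hi0 a aF Ja i0 (rfI i0).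
have [Hd Hp] := Hl0 a aF I l0 (rfL l0).
split.
  move=> phi Hphi.
  apply: le_trans (@t_diag e M (Jee i0) M1 (HM i0) m mt phi a Hphi Ja) _.
  have Hps := Hd _ (@psi_bil e M (Jee i0) M1 (HM i0) phi Hphi).
  have hd : `|mul a e - mul e a| <= eta + eta.
    have -> : mul a e - mul e a = (mul a e - a) - (mul e a - a).
      by rewrite opprB addrA subrK.
    by apply: le_trans (ler_normB _ _) _; apply: lerD; apply: ltW.
  rewrite (splitr eps); apply: lerD.
    apply: (@le_trans _ _ ((eta + eta) * M * (Sr + 1))).
      apply: ler_pM => //; first by rewrite mulr_ge0.
        by apply: ler_wpM2r.
      by rewrite lerDl ler01.
    have HM0 : M != 0 by rewrite gt_eqF.
    have HS0 : Sr + 1 != 0 by rewrite gt_eqF // ltr_wpDl.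
    have -> : (eta + eta) * M * (Sr + 1) = eps / 2.
      by rewrite /eta; field; rewrite HM0 HS0.
    by [].
  apply: le_trans (ler_wpM2l (exprn_ge0 2 M0') Hps) _.
  by rewrite /d1 mulrC divfK // expf_neq0 // gt_eqF.
apply: le_lt_trans (@t_pi e M M1 (HM i0) m mt a Ja) _.
have W := @W_bound e M M1 (HM i0) m mt a N.
have HS : \sum_(0 <= k < N) `|m.1 k| * `|mul e (mul (m.2 k) a) - mul (m.2 k) a| <= K6.
  apply: (@le_trans _ _ (\sum_(0 <= k < N) `|m.1 k| * cc)).
    apply: ler_sum_nat => k kN; apply: ler_wpM2l => //; apply: ltW; apply: Hk.
    by rewrite mem_iota add0n.
  by rewrite -mulr_suml; exact: frac_le X0 K60.
have HW : `|limn (series (fun n => mul (m.1 n) (mul e (mul (m.2 n) a) - mul (m.2 n) a)))|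
    <= K6 + K6.
  by apply: le_trans W _; apply: lerD => //; apply: HN a aF I N (leqnn N).
have HM0 : M != 0 by rewrite gt_eqF.
have HMW : M * `|limn (series (fun n => mul (m.1 n) (mul e (mul (m.2 n) a) - mul (m.2 n) a)))|
    <= e3.
  apply: le_trans (ler_wpM2l M0' HW) _.
  have -> : M * (K6 + K6) = e3 by rewrite /K6 /e3; field; rewrite HM0.
  by [].
have -> : eps = e3 + e3 + e3 by rewrite /e3; field.
by apply: ltrD => //; apply: ler_ltD.
Qed.
End Exist.

End Alg.



Lemma inv_mono (F : numFieldType) (k n : nat) : (k <= n)%N ->
  ((n.+1%:R : F)^-1 <= (k.+1%:R)^-1).
Proof.
by move=> kn; rewrite lef_pV2 ?posrE ?ltr0Sn // ler_nat ltnS.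
Qed.

Section SI.
Local Open Scope complex_scope.
Lemma small_inv (R : realType) (eps : R[i]) : 0 < eps ->
  exists k : nat, ((k.+1%:R : R[i])^-1 <= eps).
Proof.
move=> /posC [-> e0].
set x := (complex.Re eps)^-1.
have x0 : 0 <= x by rewrite /x invr_ge0 ltW.
have := archi_boundP x0; set k := Num.bound x => Hk.
exists k.
have -> : (k.+1%:R : R[i]) = (k.+1%:R : R)%:C by rewrite rmorph_nat.
rewrite -fmorphV lecR.
rewrite -[complex.Re eps]invrK lef_pV2 ?posrE ?ltr0Sn ?invr_gt0 //.
apply: ltW; apply: lt_le_trans Hk _; rewrite ler_nat //.
Qed.
End SI.

Unset Implicit Arguments. Set Strict Implicit.

Theorem proposition3p9 (R : realType) (U : completeNormedModType R[i])
  (mul : U -> U -> U) (J : set U) :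
  normed_alg_mul mul ->
  sym_pseudo_amenable mul setT ->
  closed_ideal mul J ->
  forall (I : Type) (le : I -> I -> Prop) (e : I -> U),
    directed le ->
    (forall i, J (e i)) ->
    (forall a, J a -> net_cvg le (fun i => mul (e i) a) a /\
                      net_cvg le (fun i => mul a (e i)) a) ->
    (exists M : R[i], 1 <= M /\
       forall i a, `|mul (e i) a| <= M * `|a| /\ `|mul a (e i)| <= M * `|a|) ->
  sym_pseudo_amenable mul J.
Proof.
move=> Halg [L [leL [mm [dirL mmt mms mmd mmp]]]] HJ Ix le ee dirI Jee eecvg [M [M1 HM]].
have epos : forall k : nat, 0 < ((k.+1%:R : R[i])^-1) by move=> k; rewrite invr_gt0 ltr0Sn.
have EX := fun (F : seq U) (k : nat) => @Exist R U mul Halg J HJ L leL mm dirL mmt mms mmd mmp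
   Ix le ee M dirI Jee eecvg M1 HM F ((k.+1%:R : R[i])^-1) (epos k).
pose T := fun p : seq U * nat => projT1 (cid (EX p.1 p.2)).
have TP := fun p : seq U * nat => projT2 (cid (EX p.1 p.2)).
exists (seq U * nat)%type, (fun p q => {subset p.1 <= q.1} /\ (p.2 <= q.2)%N), T.
split.
- split.
  + by move=> p; split.
  + move=> p q r [pq1 pq2] [qr1 qr2]; split; last exact: leq_trans pq2 qr2.
    by move=> x xp; apply: qr1; apply: pq1.
  + by exists ([::], 0%N).
  + move=> p q; exists (p.1 ++ q.1, maxn p.2 q.2); split; split => /=.
    * by move=> x xp; rewrite mem_cat xp.
    * by rewrite leq_maxl.
    * by move=> x xp; rewrite mem_cat xp orbT.
    * by rewrite leq_maxr.
- by move=> p; case: (TP p).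
- by move=> p; case: (TP p).
- move=> a Ja eps eps0; have [k Hk] := @small_inv R eps eps0.
  exists ([:: a], k) => p [p1 p2] phi Hphi.
  have [_ _ H] := TP p.
  have aF : a \in p.1 by apply: p1; rewrite mem_head.
  have [Hd _] := H a aF Ja.
  apply: le_trans (Hd phi Hphi) _; apply: le_trans Hk; exact: inv_mono.
- move=> a Ja eps eps0; have [k Hk] := @small_inv R eps eps0.
  exists ([:: a], k) => p [p1 p2].
  have [_ _ H] := TP p.
  have aF : a \in p.1 by apply: p1; rewrite mem_head.
  have [_ Hp] := H a aF Ja.
  apply: lt_le_trans Hp _; apply: le_trans Hk; exact: inv_mono.
Qed.
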